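(* Let $G=(V,E,w)$ be a finite connected weighted graph and $(x,y)\in E$. Let $\mathbf d,\mathbf d'$ be two vectors of positive edge lengths on $E$ which differ only on the edge $(x,y)$, with $d(x,y)\le d'(x,y)$. Then for every function $g:V\to\mathbb R$ that is $1$-Lipschitz with respect to $\mathbf d'$ and satisfies $g(y)-g(x)=d'(x,y)$, there exists a function $g':V\to\mathbb R$ that is $1$-Lipschitz with respect to $\mathbf d$, satisfies $g'(y)-g'(x)=d(x,y)$, and satisfies $d(x,y)-d'(x,y)\le g'(z)-g(z)\le 0$ for all $z\in V$.
   Context: A function $f:V\to\mathbb R$ is $1$-Lipschitz with respect to an edge-length vector $\mathbf d$ (written $f\in Lip(1)$) if $|f(s)-f(t)|\le d(s,t)$ for every edge $(s,t)\in E$. *)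

(* Defs.v *)
From HB Require Import structures.
From mathcomp Require Import all_boot all_order all_algebra.
From mathcomp Require Import reals.
Set Implicit Arguments. Unset Strict Implicit. Unset Printing Implicit Defensive.
Import Order.TTheory GRing.Theory Num.Theory.
Local Open Scope ring_scope.

Definition simple_graph (V : finType) (e : rel V) : Prop :=
  symmetric e /\ irreflexive e.

Definition connected_graph (V : finType) (e : rel V) : Prop :=
  forall s t : V, connect e s t.

(* Edge weights / edge lengths: a function on pairs, meaningful on edges,
   symmetric and positive on edges (undirected edges). *)
Definition edge_positive (R : realType) (V : finType) (e : rel V)
  (d : V -> V -> R) : Prop :=
  forall s t, e s t -> 0 < d s t /\ d s t = d t s.

Definition Lip1 (R : realType) (V : finType) (e : rel V)
  (d : V -> V -> R) (f : V -> R) : Prop :=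
  forall s t, e s t -> `|f s - f t| <= d s t.

Definition differ_only_on (R : realType) (V : finType) (e : rel V)
  (d d' : V -> V -> R) (x y : V) : Prop :=
  forall s t, e s t -> ~ ((s = x /\ t = y) \/ (s = y /\ t = x)) -> d s t = d' s t.

(* Main.v *)
Require Import Defs.
From HB Require Import structures.
From mathcomp Require Import all_boot all_order all_algebra.
From mathcomp Require Import reals lra.
Import Order.TTheory GRing.Theory Num.Theory.
Set Implicit Arguments.
Local Open Scope ring_scope.

Definition hcl {R : realType} (dl c t : R) := Num.max (t - dl) (Num.min t c).

Lemma hmono {R : realType} (dl c a b : R) : 0 <= dl -> a <= b ->
  hcl dl c a <= hcl dl c b /\ hcl dl c b - hcl dl c a <= b - a.
Proof.
move=> hd hab; rewrite /hcl.
case: (lerP (a - dl) (Num.min a c)) => h1;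
case: (lerP (b - dl) (Num.min b c)) => h2;
rewrite ?(max_r h1) ?(max_l (ltW h1)) ?(max_r h2) ?(max_l (ltW h2));
move: h1 h2; case: (lerP a c) => h3; case: (lerP b c) => h4;
rewrite ?(min_l h3) ?(min_r (ltW h3)) ?(min_l h4) ?(min_r (ltW h4)) => h1 h2;
split; lra.
Qed.

Lemma hlip {R : realType} (dl c a b D : R) : 0 <= dl ->
  `|a - b| <= D -> `|hcl dl c a - hcl dl c b| <= D.
Proof.
move=> hd; rewrite ler_norml => /andP[l1 l2]; rewrite ler_norml.
case: (lerP a b) => hab.
  have [H1 H2] := @hmono _ dl c a b hd hab.
  apply/andP; split; lra.
have [H1 H2] := @hmono _ dl c b a hd (ltW hab).
apply/andP; split; lra.
Qed.

Lemma hbounds {R : realType} (dl c t : R) : 0 <= dl ->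
  - dl <= hcl dl c t - t /\ hcl dl c t - t <= 0.
Proof.
move=> hd; rewrite /hcl.
case: (lerP (t - dl) (Num.min t c)) => h1;
rewrite ?(max_r h1) ?(max_l (ltW h1)); move: h1;
case: (lerP t c) => h3; rewrite ?(min_l h3) ?(min_r (ltW h3)) => h1; split; lra.
Qed.

Theorem lemma5p2 (R : realType) (V : finType) (e : rel V) (w : V -> V -> R)
  (x y : V) (d d' : V -> V -> R) :
  simple_graph e -> connected_graph e -> edge_positive e w ->
  e x y ->
  edge_positive e d -> edge_positive e d' ->
  differ_only_on e d d' x y ->
  d x y <= d' x y ->
  forall g : V -> R, Lip1 e d' g -> g y - g x = d' x y ->
  exists g' : V -> R,
    [/\ Lip1 e d g', g' y - g' x = d x y &
        forall z : V, d x y - d' x y <= g' z - g z /\ g' z - g z <= 0].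
Proof.
move=> _ _ _ exy dpos d'pos hdiff hle g hg hgxy.
set dl := d' x y - d x y.
have hd : 0 <= dl by rewrite /dl subr_ge0.
set c := g x + d x y.
have hx : hcl dl c (g x) = g x.
  rewrite /hcl; have [dxy _] := dpos _ _ exy.
  rewrite min_l; last by rewrite /c; lra.
  by rewrite max_r //; lra.
have hy : hcl dl c (g y) = c.
  rewrite /hcl min_r; last by rewrite /c; lra.
  by rewrite max_r // /c /dl; lra.
exists (fun z => hcl dl c (g z)); split.
- move=> s t est; have [dxy0 _] := dpos _ _ exy.
  have [H | hne] := boolP [|| (s == x) && (t == y) | (s == y) && (t == x)].
    move: H; case/orP=> /andP[/eqP -> /eqP ->]; rewrite /= hx hy /c.
      by rewrite ler_norml; apply/andP; split; lra.
    have [_ <-] := dpos _ _ exy.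
    by rewrite ler_norml; apply/andP; split; lra.
  rewrite (hdiff s t est); last first.
    move=> HH; move: hne; case: HH => [[-> ->]|[-> ->]]; by rewrite !eqxx ?orbT.
  exact: (@hlip _ dl c (g s) (g t) _ hd (hg s t est)).
- by rewrite /= hx hy /c; lra.
- move=> z; have := @hbounds _ dl c (g z) hd; rewrite /dl; lra.
Qed.
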